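(* Let $P\ge 2$ be an integer, $m\in(-1,1)$, $\rho_o$ a real number such that $C^{out}=\rho_o\mathbf{1}\mathbf{1}^T+(1-\rho_o)I$ is positive semi-definite, and let $\delta_m>0$. Let $\delta M$ be a collection of real numbers $\delta M_{\mu\nu}$, $1\le\mu<\nu\le P$, with $|\delta M_{\mu\nu}|<\delta_m$, such that the symmetric matrix $C^{in}$ with $C^{in}_{\mu\mu}=1$ and $C^{in}_{\mu\nu}=C^{in}_{\nu\mu}=m+\delta M_{\mu\nu}$ for $\mu<\nu$ is a correlation matrix. Define $$\bar\epsilon_f[C^{in},C^{out}]=\left\lVert (C^{out})^{1/2}\left(I-(I+C^{in,U})^{-1}C^{in}\right)\right\rVert_F^2,$$ where $C^{in,U}$ is the strictly upper-triangular part of $C^{in}$ and $(C^{out})^{1/2}$ is the positive semi-definite square root of $C^{out}$, and let $\bar\epsilon_f[m,\rho_o]$ denote this quantity when all $\delta M_{\mu\nu}=0$. Then there are coefficients $G_{\mu\nu}$ depending only on $m$, $\rho_o$ and $P$ such that $$\bar\epsilon_f[C^{in},C^{out}]=\bar\epsilon_f[m,\rho_o]+2\sum_{\mu=1}^P\sum_{\nu=\mu+1}^P G_{\mu\nu}\,\delta M_{\mu\nu}+\mathcal{O}(\delta_m^2)\quad(\delta_m\to 0),$$ and, when $\rho_o=1$, $G_{\mu\nu}=G^+_{\mu\nu}+G^-_{\mu\nu}$ with $$G^+_{\mu\nu}=-(1-m)^{P+\mu-1}-(1-m)^{P+\nu-1}+\tfrac{3-m}{2-m}(1-m)^{\mu+\nu-1},$$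 $$G^-_{\mu\nu}=-\left(1-(1-m)^P\left(\tfrac{mP}{1-m}+\tfrac{3-m}{2-m}\right)\right)(1-m)^{P-(\nu-\mu)}.$$
   Context: $\mathbf{1}$ is the all-ones vector in $\mathbb{R}^P$, $I$ the $P\times P$ identity, and $\lVert\cdot\rVert_F$ the Frobenius norm. The function $\bar\epsilon_f[C^{in},C^{out}]$ is the asymptotic average final error of sequential (task-incremental) learning of $P$ linear regression tasks in a linear teacher–student model with input and output task-correlation matrices $C^{in}$, $C^{out}$, tasks learned in the order $1,\dots,P$. *)

(* Defs.v *)
From HB Require Import structures.
From mathcomp Require Import all_boot all_order all_algebra.
From mathcomp Require Import reals.
From Stdlib Require Import ClassicalEpsilon.
Set Implicit Arguments. Unset Strict Implicit. Unset Printing Implicit Defensive.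
Import Order.TTheory GRing.Theory Num.Theory.
Local Open Scope ring_scope.

Section Defs.
Variable R : realType.
Variable P : nat.

Definition psd (A : 'M[R]_P) : Prop :=
  A^T = A /\ forall x : 'cV[R]_P, 0 <= (x^T *m A *m x) 0 0.

Definition corr_matrix (A : 'M[R]_P) : Prop :=
  psd A /\ forall i, A i i = 1.

(* the positive semi-definite square root (chosen by epsilon; it is unique
   whenever it exists, and it exists for PSD matrices) *)
Definition psd_sqrt (A : 'M[R]_P) : 'M[R]_P :=
  epsilon (inhabits 0) (fun S : 'M[R]_P => psd S /\ S *m S = A).

Definition frob_norm (A : 'M[R]_P) : R :=
  Num.sqrt (\sum_(i < P) \sum_(j < P) A i j ^+ 2).

Definition strict_upper (A : 'M[R]_P) : 'M[R]_P :=
  \matrix_(i, j) (if (i < j)%N then A i j else 0).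

Definition eps_f (Cin Cout : 'M[R]_P) : R :=
  frob_norm (psd_sqrt Cout *m (1%:M - invmx (1%:M + strict_upper Cin) *m Cin)) ^+ 2.

Definition Cout_mat (rho : R) : 'M[R]_P := const_mx rho + (1 - rho)%:M.

(* C^in with C_{mu mu} = 1, C_{mu nu} = C_{nu mu} = m + dM_{mu nu} (mu < nu);
   only the entries dM i j with i < j are used *)
Definition Cin_mat (m : R) (dM : 'I_P -> 'I_P -> R) : 'M[R]_P :=
  \matrix_(i, j) (if i == j then 1
                  else if (i < j)%N then m + dM i j else m + dM j i).

(* G^+ and G^- with 0-based indices: mu = i+1, nu = j+1 *)
Definition Gplus (m : R) (i j : 'I_P) : R :=
  - (1 - m) ^+ (P + i) - (1 - m) ^+ (P + j)
  + (3 - m) / (2 - m) * (1 - m) ^+ (i + j + 1).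

Definition Gminus (m : R) (i j : 'I_P) : R :=
  - (1 - (1 - m) ^+ P * (m * P%:R / (1 - m) + (3 - m) / (2 - m)))
    * (1 - m) ^+ (P - (j - i)).

End Defs.

(* Main.v *)
Require Import Defs.
From HB Require Import structures.
From mathcomp Require Import all_boot all_order all_algebra.
From mathcomp Require Import reals.
From mathcomp Require Import ring lra zify.
From Stdlib Require Import ClassicalEpsilon.
Set Implicit Arguments. Unset Strict Implicit. Unset Printing Implicit Defensive.
Import Order.TTheory GRing.Theory Num.Theory.
Local Open Scope ring_scope.


Definition N1 (R : realFieldType) (p q : nat) (A : 'M[R]_(p, q)) : R :=
  \sum_(i < p) \sum_(j < q) `|A i j|.

Lemma N1_ge0 (R : realFieldType) p q (A : 'M[R]_(p, q)) : 0 <= N1 A.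
Proof. by apply: sumr_ge0 => i _; apply: sumr_ge0 => j _. Qed.

Lemma N1_entry (R : realFieldType) p q (A : 'M[R]_(p, q)) i j : `|A i j| <= N1 A.
Proof.
rewrite /N1 (bigD1 i) //= (bigD1 j) //= -addrA lerDl.
apply: addr_ge0; first by apply: sumr_ge0.
by apply: sumr_ge0 => k _; apply: sumr_ge0.
Qed.

Lemma N1D (R : realFieldType) p q (A B : 'M[R]_(p, q)) : N1 (A + B) <= N1 A + N1 B.
Proof.
rewrite /N1 -big_split /=; apply: ler_sum => i _.
rewrite -big_split /=; apply: ler_sum => j _; rewrite mxE; exact: ler_normD.
Qed.

Lemma N1N (R : realFieldType) p q (A : 'M[R]_(p, q)) : N1 (- A) = N1 A.
Proof. by apply: eq_bigr => i _; apply: eq_bigr => j _; rewrite mxE normrN. Qed.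

Lemma N1B (R : realFieldType) p q (A B : 'M[R]_(p, q)) : N1 (A - B) <= N1 A + N1 B.
Proof. by rewrite -(N1N B); apply: N1D. Qed.

Lemma N1M (R : realFieldType) p q r (A : 'M[R]_(p, q)) (B : 'M[R]_(q, r)) :
  N1 (A *m B) <= N1 A * N1 B.
Proof.
rewrite /N1 mulr_suml; apply: ler_sum => i _.
rewrite mulr_suml.
apply: (@le_trans _ _ (\sum_(k < r) \sum_(j < q) `|A i j| * `|B j k|)).
  apply: ler_sum => k _; rewrite mxE.
  apply: le_trans (ler_norm_sum _ _ _) _.
  by apply: ler_sum => j _; rewrite normrM.
rewrite exchange_big /=; apply: ler_sum => j _.
rewrite -mulr_sumr; apply: ler_wpM2l => //.
rewrite (bigD1 j) //= lerDl; apply: sumr_ge0 => k _; exact: sumr_ge0.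
Qed.

Definition qf (R : realFieldType) p q (A : 'M[R]_(p, q)) : R :=
  \sum_(i < p) \sum_(j < q) A i j ^+ 2.
Definition bf (R : realFieldType) p q (A B : 'M[R]_(p, q)) : R :=
  \sum_(i < p) \sum_(j < q) A i j * B i j.

Lemma qfD (R : realFieldType) p q (A B : 'M[R]_(p, q)) :
  qf (A + B) = qf A + 2 * bf A B + qf B.
Proof.
rewrite /qf /bf mulr_sumr -!big_split /=; apply: eq_bigr => i _.
rewrite mulr_sumr -!big_split /=; apply: eq_bigr => j _; rewrite mxE.
ring.
Qed.

Lemma bfD (R : realFieldType) p q (A B C : 'M[R]_(p, q)) :
  bf A (B + C) = bf A B + bf A C.
Proof.
rewrite /bf -big_split /=; apply: eq_bigr => i _.
rewrite -big_split /=; apply: eq_bigr => j _; rewrite mxE; ring.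
Qed.

Lemma bf_le (R : realFieldType) p q (A B : 'M[R]_(p, q)) :
  `|bf A B| <= N1 A * N1 B.
Proof.
rewrite /bf /N1 mulr_sumr.
apply: le_trans (ler_norm_sum _ _ _) _; apply: ler_sum => i _.
rewrite mulr_sumr.
apply: le_trans (ler_norm_sum _ _ _) _; apply: ler_sum => j _.
rewrite normrM; apply: ler_wpM2r => //.
by rewrite -/(N1 A) N1_entry.
Qed.

Lemma qf_bf (R : realFieldType) p q (A : 'M[R]_(p, q)) : qf A = bf A A.
Proof. by apply: eq_bigr => i _; apply: eq_bigr => j _; rewrite expr2. Qed.

Lemma qf_le (R : realFieldType) p q (A : 'M[R]_(p, q)) : qf A <= N1 A ^+ 2.
Proof. rewrite qf_bf expr2; exact: le_trans (ler_norm _) (bf_le _ _). Qed.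

Lemma N1_le_const (R : realFieldType) p (A : 'M[R]_p) (d : R) :
  (forall i j, `|A i j| <= d) -> N1 A <= p%:R ^+ 2 * d.
Proof.
move=> H; rewrite /N1.
apply: (@le_trans _ _ (\sum_(i < p) \sum_(j < p) d)).
  by apply: ler_sum => i _; apply: ler_sum => j _.
rewrite !sumr_const !card_ord -mulrnA.
suff -> : p%:R ^+ 2 * d = d *+ (p * p) by [].
by rewrite -[RHS]mulr_natr natrM mulrC expr2.
Qed.


Lemma resolvent (R : comUnitRingType) n (A A0 : 'M[R]_n) :
  A \in unitmx -> A0 \in unitmx ->
  invmx A - invmx A0 = - (invmx A0 *m (A - A0) *m invmx A).
Proof.
move=> uA uA0.
rewrite mulmxBr mulmxBl mulVmx // mul1mx -mulmxA mulmxV // mulmx1.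
by rewrite opprB.
Qed.

Lemma decompM (R : comUnitRingType) n (A A0 C C0 : 'M[R]_n) :
  A \in unitmx -> A0 \in unitmx ->
  let X := invmx A in let X0 := invmx A0 in
  let F := A - A0 in let E := C - C0 in
  1%:M - X *m C =
  (1%:M - X0 *m C0) + (X0 *m F *m X0 *m C0 - X0 *m E)
   + (X0 *m F *m (X - X0) *m C0 - (X - X0) *m E).
Proof.
move=> uA uA0 X X0 F E.
have KX : X - X0 = - (X0 *m F *m X) by apply: resolvent.
set D := X - X0.
have eX : X = X0 + D by rewrite /D addrC subrK.
have eC : C = C0 + E by rewrite /E addrC subrK.
have eD : D = - (X0 *m F *m X0) - X0 *m F *m D.
  by rewrite {1}/D KX {1}eX mulmxDr opprD.
clearbody D; clear KX.
rewrite eX eC.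
clearbody X X0 F E.
have eDC : D *m C0 = - (X0 *m F *m X0 *m C0) - X0 *m F *m D *m C0.
  by rewrite {1}eD mulmxBl mulNmx.
rewrite mulmxDl !mulmxDr eDC.
set a := X0 *m C0; set b := X0 *m E; set c := X0 *m F *m X0 *m C0;
  set d := X0 *m F *m D *m C0; set e := D *m E.
rewrite !opprD !opprK !addrA.
by congr (_ + _ + _); rewrite addrAC.
Qed.


Lemma eqW (R : realFieldType) (x y : R) : x = y -> x <= y.
Proof. by move=> ->. Qed.

Lemma est (R : realFieldType) (P : nat) (S X0 C0 Y0 : 'M[R]_P) :
  exists K d0 : R, 0 < d0 /\
  forall (dm : R) (X F E : 'M[R]_P), 0 < dm -> dm < d0 ->
    X - X0 = - (X0 *m F *m X) ->
    N1 F <= P%:R ^+ 2 * dm -> N1 E <= P%:R ^+ 2 * dm ->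
    `| 2 * bf Y0 (S *m (X0 *m F *m (X - X0) *m C0 - (X - X0) *m E))
       + qf (S *m (X0 *m F *m X0 *m C0 - X0 *m E)
             + S *m (X0 *m F *m (X - X0) *m C0 - (X - X0) *m E)) |
    <= K * dm ^+ 2.
Proof.
set k : R := P%:R ^+ 2.
have k0 : 0 <= k by rewrite /k exprn_ge0.
set x0 := N1 X0; set c0 := N1 C0; set s := N1 S; set a0 := N1 Y0.
have x00 : 0 <= x0 := N1_ge0 _. have c00 : 0 <= c0 := N1_ge0 _.
have s0 : 0 <= s := N1_ge0 _. have a00 : 0 <= a0 := N1_ge0 _.
set r := 2 * x0 ^+ 3 * c0 + 2 * x0 ^+ 2.
set l := x0 ^+ 2 * c0 + x0.
have r0 : 0 <= r by rewrite /r; apply: addr_ge0; apply: mulr_ge0 => //;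
  try apply: mulr_ge0 => //; apply: exprn_ge0.
have l0 : 0 <= l by rewrite /l; apply: addr_ge0 => //; apply: mulr_ge0 => //; apply: exprn_ge0.
exists (2 * a0 * s * (k ^+ 2 * r) + (s * (k * l + k ^+ 2 * r)) ^+ 2).
exists ((2 * (k * x0 + 1))^-1).
have kx0 : 0 <= k * x0 by apply: mulr_ge0.
split; first by rewrite invr_gt0; lra.
move=> dm X F E dm0 dmd KX NF NE.
have dm1 : dm <= 1.
  apply: (le_trans (ltW dmd)); rewrite invf_le1; lra.
set t := k * dm.
have t0 : 0 <= t by rewrite /t; apply: mulr_ge0 => //; apply: ltW.
have f0 : 0 <= N1 F := N1_ge0 _. have e0 : 0 <= N1 E := N1_ge0 _.
have xf : x0 * N1 F <= 1 / 2.
  apply: (@le_trans _ _ (x0 * t)); first by apply: ler_wpM2l.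
  have : x0 * t <= k * x0 * (2 * (k * x0 + 1))^-1.
    rewrite /t mulrA [x0 * k]mulrC; apply: ler_wpM2l => //; exact: ltW.
  move=> h; apply: (le_trans h).
  rewrite ler_pdivrMr; last lra.
  lra.
have NX : N1 X <= 2 * x0.
  have eX : X = X0 - X0 *m F *m X by rewrite -KX addrC subrK.
  have h1 : N1 X <= x0 + x0 * N1 F * N1 X.
    rewrite {1}eX; apply: (le_trans (N1B _ _)); apply: lerD => //.
    apply: (le_trans (N1M _ _)); apply: ler_wpM2r; first exact: N1_ge0.
    exact: N1M.
  have hX : 0 <= N1 X := N1_ge0 _.
  nra.
have ND : N1 (X - X0) <= 2 * x0 ^+ 2 * t.
  rewrite KX N1N.
  apply: (le_trans (N1M _ _)).
  apply: (@le_trans _ _ (x0 * N1 F * N1 X)).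
    apply: ler_wpM2r; first exact: N1_ge0. exact: N1M.
  have hX : 0 <= N1 X := N1_ge0 _.
  have : N1 F <= t by [].
  move=> hF.
  have h2 : x0 * N1 F <= x0 * t by apply: ler_wpM2l.
  have h3 : x0 * N1 F * N1 X <= x0 * t * (2 * x0).
    apply: (le_trans (ler_wpM2l _ NX)); first exact: mulr_ge0.
    apply: ler_wpM2r => //; lra.
  apply: (le_trans h3); rewrite expr2; lra.
have ND0 : 0 <= N1 (X - X0) := N1_ge0 _.
set Rm := X0 *m F *m (X - X0) *m C0 - (X - X0) *m E.
set M1 := X0 *m F *m X0 *m C0 - X0 *m E.
have NR : N1 Rm <= t ^+ 2 * r.
  apply: (le_trans (N1B _ _)).
  have h1 : N1 (X0 *m F *m (X - X0) *m C0) <= x0 * t * (2 * x0 ^+ 2 * t) * c0.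
    apply: (le_trans (N1M _ _)); apply: ler_wpM2r => //.
    apply: (le_trans (N1M _ _)).
    apply: (@le_trans _ _ (x0 * N1 F * N1 (X - X0))).
      apply: ler_wpM2r => //; exact: N1M.
    apply: (@le_trans _ _ (x0 * t * N1 (X - X0))).
      apply: ler_wpM2r => //; exact: ler_wpM2l.
    apply: ler_wpM2l => //; exact: mulr_ge0.
  have h2 : N1 ((X - X0) *m E) <= 2 * x0 ^+ 2 * t * t.
    apply: (le_trans (N1M _ _)).
    apply: (le_trans (ler_wpM2r e0 ND)).
    apply: ler_wpM2l => //; apply: mulr_ge0 => //; apply: mulr_ge0 => //;
      exact: exprn_ge0.
  apply: (le_trans (lerD h1 h2)).
  rewrite /r !expr2; apply/eqW; ring.
have NM1 : N1 M1 <= t * l.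
  apply: (le_trans (N1B _ _)).
  have h1 : N1 (X0 *m F *m X0 *m C0) <= x0 * t * x0 * c0.
    apply: (le_trans (N1M _ _)); apply: ler_wpM2r => //.
    apply: (le_trans (N1M _ _)); apply: ler_wpM2r => //.
    apply: (le_trans (N1M _ _)); exact: ler_wpM2l.
  have h2 : N1 (X0 *m E) <= x0 * t.
    apply: (le_trans (N1M _ _)); exact: ler_wpM2l.
  apply: (le_trans (lerD h1 h2)).
  rewrite /l !expr2; apply/eqW; ring.
have NR0 : 0 <= N1 Rm := N1_ge0 _.
have NM10 : 0 <= N1 M1 := N1_ge0 _.
apply: (le_trans (ler_normD _ _)).
have hb : `|2 * bf Y0 (S *m Rm)| <= 2 * a0 * s * (k ^+ 2 * r) * dm ^+ 2.
  have h1 : N1 (S *m Rm) <= s * (k ^+ 2 * r * dm ^+ 2).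
    apply: (le_trans (N1M _ _)); apply: ler_wpM2l => //.
    by move: NR; rewrite /t exprMn mulrAC.
  have h2 := le_trans (bf_le Y0 (S *m Rm)) (ler_wpM2l a00 h1).
  rewrite normrM ger0_norm //.
  apply: (le_trans (ler_wpM2l _ h2)) => //; apply/eqW; ring.
have hq : `|qf (S *m M1 + S *m Rm)| <= (s * (k * l + k ^+ 2 * r)) ^+ 2 * dm ^+ 2.
  have q0 : 0 <= qf (S *m M1 + S *m Rm).
    by apply: sumr_ge0 => i _; apply: sumr_ge0 => j _; apply: sqr_ge0.
  rewrite ger0_norm //; apply: (le_trans (qf_le _)).
  rewrite -exprMn; apply: lerXn2r; rewrite ?nnegrE ?N1_ge0 //.
    apply: mulr_ge0; last exact: ltW.
    apply: mulr_ge0 => //; apply: addr_ge0; apply: mulr_ge0 => //; exact: exprn_ge0.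
  apply: (le_trans (N1D _ _)).
  apply: (le_trans (lerD (N1M _ _) (N1M _ _))).
  rewrite -mulrDr -mulrA; apply: ler_wpM2l => //.
  have hdm2 : dm ^+ 2 <= dm by rewrite expr2; nra.
  have : t ^+ 2 * r <= k ^+ 2 * r * dm.
    rewrite /t exprMn mulrAC; apply: ler_wpM2l => //.
    by apply: mulr_ge0 => //; apply: exprn_ge0.
  move=> h2.
  have h1 : t * l = k * dm * l by [].
  have : N1 M1 + N1 Rm <= k * dm * l + k ^+ 2 * r * dm by lra.
  move=> h; apply: (le_trans h); apply/eqW; ring.
apply: (le_trans (lerD hb hq)); apply/eqW; ring.
Qed.


Lemma bf_tr (R : realFieldType) p (A B : 'M[R]_p) : bf A B = \tr (A^T *m B).
Proof.
rewrite /bf /mxtrace exchange_big /=; apply: eq_bigr => i _.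
by rewrite mxE; apply: eq_bigr => j _; rewrite mxE.
Qed.

Definition Fm (R : realFieldType) p (dM : 'I_p -> 'I_p -> R) : 'M[R]_p :=
  \matrix_(i, j) (if (i < j)%N then dM i j else 0).
Definition Em (R : realFieldType) p (dM : 'I_p -> 'I_p -> R) : 'M[R]_p :=
  \matrix_(i, j) (if i == j then 0 else if (i < j)%N then dM i j else dM j i).

Lemma trF (R : realFieldType) p (H : 'M[R]_p) dM :
  \tr (H *m Fm dM) = \sum_(i < p) \sum_(j < p | (i < j)%N) H j i * dM i j.
Proof.
rewrite /mxtrace.
under eq_bigr => a _ do rewrite mxE.
rewrite exchange_big /=; apply: eq_bigr => b _.
rewrite [RHS]big_mkcond /=; apply: eq_bigr => a _; rewrite mxE.
by case: ifP => _; rewrite ?mulr0.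
Qed.

Lemma trE (R : realFieldType) p (H : 'M[R]_p) dM :
  \tr (H *m Em dM) = \sum_(i < p) \sum_(j < p | (i < j)%N) (H j i + H i j) * dM i j.
Proof.
have -> : Em dM = Fm dM + (Fm dM)^T.
  apply/matrixP => i j; rewrite !mxE.
  case: (ltngtP i j) => h.
  - by case: eqP => [e|]; [rewrite e ltnn in h | rewrite addr0].
  - by case: eqP => [e|]; [rewrite e ltnn in h | rewrite add0r].
  - by rewrite (val_inj h) eqxx addr0.
rewrite mulmxDr mxtraceD trF.
have -> : \tr (H *m (Fm dM)^T) = \sum_(i < p) \sum_(j < p | (i < j)%N) H i j * dM i j.
  rewrite /mxtrace; apply: eq_bigr => a _; rewrite mxE [RHS]big_mkcond /=.
  by apply: eq_bigr => b _; rewrite !mxE; case: ifP => _; rewrite ?mulr0.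
rewrite -big_split /=; apply: eq_bigr => i _.
by rewrite -big_split /=; apply: eq_bigr => j _; rewrite mulrDl.
Qed.


Definition Am (R : realType) P (C : 'M[R]_P) : 'M[R]_P := 1%:M + strict_upper C.

Lemma unitA (R : realType) P (C : 'M[R]_P) : Am C \in unitmx.
Proof.
rewrite unitmxE -det_tr det_trig.
  rewrite big1 ?unitr1 // => i _; rewrite !mxE eqxx ltnn /=; ring.
apply/is_trig_mxP => i j h; rewrite !mxE.
rewrite ltnNge (ltnW h) /=.
by case: eqP => [e|]; [rewrite e ltnn in h | rewrite addr0].
Qed.

Lemma FmE (R : realType) (P : nat) (m : R) (dM : 'I_P -> 'I_P -> R) :
  Am (Cin_mat m dM) - Am (Cin_mat m (fun _ _ => 0)) = Fm dM.
Proof.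
apply/matrixP => i j; rewrite !mxE.
case: ifP => h; last by rewrite !addr0 subrr.
have ne : (i == j) = false by apply/eqP => e; rewrite e ltnn in h.
rewrite ne h; ring.
Qed.

Lemma EmE (R : realType) (P : nat) (m : R) (dM : 'I_P -> 'I_P -> R) :
  Cin_mat m dM - Cin_mat m (fun _ _ => 0) = Em dM.
Proof.
apply/matrixP => i j; rewrite !mxE.
case: eqP => _; first by rewrite subrr.
case: ifP => _; ring.
Qed.

Lemma eps_qf (R : realType) P (Cin Cout : 'M[R]_P) :
  eps_f Cin Cout = qf (psd_sqrt Cout *m (1%:M - invmx (Am Cin) *m Cin)).
Proof.
rewrite /eps_f /frob_norm sqr_sqrtr //.
by apply: sumr_ge0 => i _; apply: sumr_ge0 => j _; apply: sqr_ge0.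
Qed.

Lemma Fm_bound (R : realType) P (dM : 'I_P -> 'I_P -> R) dm :
  0 < dm -> (forall i j : 'I_P, (i < j)%N -> `|dM i j| < dm) ->
  forall i j, `|Fm dM i j| <= dm.
Proof.
move=> d0 H i j; rewrite mxE; case: ifP => h; last by rewrite normr0 ltW.
exact: ltW (H _ _ h).
Qed.

Lemma Em_bound (R : realType) P (dM : 'I_P -> 'I_P -> R) dm :
  0 < dm -> (forall i j : 'I_P, (i < j)%N -> `|dM i j| < dm) ->
  forall i j, `|Em dM i j| <= dm.
Proof.
move=> d0 H i j; rewrite mxE; case: eqP => e; first by rewrite normr0 ltW.
case: ifP => h; first exact: ltW (H _ _ h).
apply: ltW; apply: H; case: (ltngtP i j) h => // h' _.
by case: e; apply: val_inj.
Qed.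

Definition Gdef (R : realType) (P : nat) (m : R) (S : 'M[R]_P) (i j : 'I_P) : R :=
  let C0 := Cin_mat m (fun _ _ => 0) in
  let X0 := invmx (Am C0) in
  let M0 := 1%:M - X0 *m C0 in
  let W := (S *m M0)^T *m S in
  let H2 := W *m X0 in
  let H1 := X0 *m C0 *m H2 in
  H1 j i - H2 j i - H2 i j.

Lemma linear_part (R : realType) (P : nat) (m : R) (S : 'M[R]_P) dM :
  let C0 := Cin_mat m (fun _ _ => 0) in
  let X0 := invmx (Am C0) in
  let M0 := 1%:M - X0 *m C0 in
  bf (S *m M0) (S *m (X0 *m Fm dM *m X0 *m C0 - X0 *m Em dM)) =
  \sum_(i < P) \sum_(j < P | (i < j)%N) Gdef m S i j * dM i j.
Proof.
move=> C0 X0 M0.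
rewrite bf_tr mulmxA.
set W := (S *m M0)^T *m S.
rewrite mulmxBr raddfB /=.
have -> : W *m (X0 *m Fm dM *m X0 *m C0) = (W *m X0 *m Fm dM) *m (X0 *m C0).
  by rewrite !mulmxA.
rewrite mxtrace_mulC.
have -> : X0 *m C0 *m (W *m X0 *m Fm dM) = (X0 *m C0 *m (W *m X0)) *m Fm dM.
  by rewrite !mulmxA.
rewrite [W *m (X0 *m _)]mulmxA trF trE -sumrB; apply: eq_bigr => i _.
rewrite -sumrB; apply: eq_bigr => j _.
rewrite /Gdef -/C0 -/X0 -/M0 -/W; ring.
Qed.



Lemma sum_delta (R : realFieldType) P (j : 'I_P) (f : nat -> R) :
  \sum_(k < P) (if j == k then f k else 0) = f j.
Proof.
rewrite (bigD1 j) //= eqxx big1 ?addr0 // => k hk.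
by rewrite eq_sym (negPf hk).
Qed.

Lemma sum_lt (R : realFieldType) P (j : nat) (f : nat -> R) : (j <= P)%N ->
  \sum_(k < P) (if (k < j)%N then f k else 0) = \sum_(0 <= k < j) f k.
Proof.
move=> hj.
rewrite -(big_mkord xpredT (fun k => if (k < j)%N then f k else 0)).
rewrite (big_cat_nat (leq0n j) hj) /=.
rewrite [X in _ + X]big1_seq ?addr0.
  by apply: eq_big_nat => k /andP[_ hk]; rewrite hk.
move=> k /andP[_]; rewrite mem_index_iota => /andP[hk _].
by rewrite ltnNge hk.
Qed.

Lemma sum_gt (R : realFieldType) P (j : nat) (f : nat -> R) : (j < P)%N ->
  \sum_(k < P) (if (j < k)%N then f k else 0) = \sum_(j.+1 <= k < P) f k.
Proof.
move=> hj.
rewrite -(big_mkord xpredT (fun k => if (j < k)%N then f k else 0)).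
rewrite (big_cat_nat (leq0n j.+1) hj) /=.
rewrite big1_seq ?add0r.
  by apply: eq_big_nat => k /andP[hk _]; rewrite hk.
move=> k /andP[_]; rewrite mem_index_iota => /andP[_ hk].
by rewrite ltnNge -ltnS hk.
Qed.

Lemma geom1 (R : realFieldType) (m : R) a b : (a <= b)%N ->
  m * \sum_(a <= k < b) (1 - m) ^+ k = (1 - m) ^+ a - (1 - m) ^+ b.
Proof.
elim: b => [|b IH] hab.
  by rewrite leqn0 in hab; rewrite (eqP hab) big_geq // mulr0 subrr.
case: (ltngtP a b.+1) hab => // h _.
  rewrite big_nat_recr //= mulrDr IH // exprS; ring.
by rewrite h big_geq // mulr0 subrr.
Qed.

Lemma geom2 (R : realFieldType) (m : R) j d :
  m * \sum_(j <= k < j + d) (1 - m) ^+ (j + d - k) = (1 - m) - (1 - m) ^+ d.+1.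
Proof.
elim: d j => [|d IH] j.
  by rewrite addn0 big_geq // mulr0 expr1 subrr.
rewrite big_ltn; last by lia.
rewrite mulrDr (_ : (j + d.+1 = j.+1 + d)%N); last by lia.
rewrite IH (_ : (j.+1 + d - j = d.+1)%N); last by lia.
rewrite [X in _ = _ - X]exprS; ring.
Qed.


Lemma sqrt_J (R : realType) (P : nat) : (0 < P)%N ->
  let S := psd_sqrt (Cout_mat P (1 : R)) in
  S^T = S /\ S *m S = const_mx 1.
Proof.
move=> P0 S.
have CJ : Cout_mat P (1 : R) = const_mx 1.
  by apply/matrixP => i j; rewrite !mxE subrr mul0rn addr0.
set c : R := (Num.sqrt P%:R)^-1.
have c0 : 0 <= c by rewrite /c invr_ge0 sqrtr_ge0.
have Pp : (0 : R) < P%:R by rewrite ltr0n.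
have ex : exists S0 : 'M[R]_P, psd S0 /\ S0 *m S0 = Cout_mat P 1.
  exists (const_mx c); split; first split.
  - exact: trmx_const.
  - move=> x.
    have -> : x^T *m const_mx c = const_mx (c * \sum_(k < P) x k 0) :> 'rV_P.
      apply/matrixP => i j; rewrite !mxE mulr_sumr; apply: eq_bigr => k _.
      by rewrite !mxE mulrC (ord1 i).
    rewrite mxE; set s := c * _.
    under eq_bigr => k _ do rewrite mxE.
    rewrite -mulr_sumr /s -mulrA -expr2.
    by apply: mulr_ge0 => //; apply: sqr_ge0.
  - rewrite CJ; apply/matrixP => i j; rewrite !mxE.
    under eq_bigr => k _ do rewrite !mxE.
    rewrite sumr_const card_ord -mulr_natr -expr2 /c exprVn sqr_sqrtr ?ler0n //.
    by rewrite mulVf // gt_eqF.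
have [[hT _] hS] := epsilon_spec (inhabits 0) _ ex.
by split => //; rewrite -CJ.
Qed.


Lemma C0E (R : realType) (P : nat) (m : R) (a b : 'I_P) :
  Cin_mat m (fun _ _ => 0) a b = if a == b then 1 else m.
Proof. by rewrite mxE; case: eqP => //; case: ifP => _; rewrite addr0. Qed.

Lemma A0E (R : realType) (P : nat) (m : R) (a b : 'I_P) :
  Am (Cin_mat m (fun _ _ => 0)) a b =
  if a == b then 1 else if (a < b)%N then m else 0.
Proof.
rewrite !mxE; case: eqP => [->|ne]; first by rewrite ltnn addr0.
by case: ifP => _; rewrite add0r ?addr0 ?if_same.
Qed.

Lemma L1 (R : realType) (P : nat) (m : R) :
  (Am (Cin_mat m (fun _ _ => 0)))^T *m (\col_(j < P) (1 - m) ^+ j)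
  = const_mx 1.
Proof.
apply/matrixP => j z; rewrite !mxE.
rewrite (eq_bigr (fun k : 'I_P => (if j == k then (1 - m) ^+ k else 0)
   + (if (k < j)%N then m * (1 - m) ^+ k else 0))); last first.
  move=> k _; rewrite [_^T _ _]mxE [(\col_j0 _) _ _]mxE A0E.
  case: (eqVneq k j) => [->|ne]; first by rewrite ltnn mul1r addr0.
  rewrite add0r.
  by case: ifP => _; rewrite ?mul0r.
rewrite big_split /= sum_delta (sum_lt (fun k => m * (1 - m) ^+ k)); last exact: ltnW.
by rewrite -mulr_sumr geom1 // expr0 addrC subrK.
Qed.

Lemma L2 (R : realType) (P : nat) (m : R) :
  Cin_mat m (fun _ _ => 0) *m (\col_(j < P) (1 - m) ^+ j)
  = const_mx 1 - \col_(j < P) ((1 - m) ^+ P - (1 - m) ^+ j.+1).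
Proof.
apply/matrixP => i z; rewrite !mxE.
rewrite (eq_bigr (fun k : 'I_P => m * (1 - m) ^+ k
   + (if i == k then (1 - m) * (1 - m) ^+ k else 0))); last first.
  move=> k _; rewrite [(\col_j0 _) _ _]mxE C0E.
  by case: eqP => _; ring.
rewrite big_split /= (sum_delta i (fun k => (1 - m) * (1 - m) ^+ k)) -mulr_sumr.
rewrite -(big_mkord xpredT (fun k => (1 - m) ^+ k)) geom1 // expr0 exprS; ring.
Qed.

Definition Kc (R : realType) (P : nat) (m : R) : R :=
  1 - (1 - m) ^+ P * (m * P%:R / (1 - m) + (3 - m) / (2 - m)).
Definition zf (R : realType) (P : nat) (m : R) (j : nat) : R :=
  - (1 - m) ^+ P + (1 - m) ^+ j.+1 / (2 - m) - Kc P m * (1 - m) ^+ (P - j).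
Definition uf (R : realType) (P : nat) (m : R) (j : nat) : R :=
  (1 - m) ^+ P - (1 - m) ^+ j.+1.

Lemma L3 (R : realType) (P : nat) (m : R) : m != 1 -> m != 2 ->
  Am (Cin_mat m (fun _ _ => 0)) *m (\col_(j < P) zf P m j)
  = (Cin_mat m (fun _ _ => 0) - Am (Cin_mat m (fun _ _ => 0)))
     *m (\col_(j < P) uf P m j).
Proof.
move=> m1 m2.
apply/matrixP => v z; rewrite !mxE.
rewrite (eq_bigr (fun k : 'I_P => (if v == k then zf P m k else 0)
   + (if (v < k)%N then m * zf P m k else 0))); last first.
  move=> k _; rewrite [(\col_j0 _) _ _]mxE A0E.
  case: (eqVneq v k) => [->|ne]; first by rewrite ltnn mul1r addr0.
  rewrite add0r.
  by case: ifP => _; rewrite ?mul0r.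
rewrite [RHS](eq_bigr (fun k : 'I_P => 
   (if (k < v)%N then m * uf P m k else 0))); last first.
  move=> k _; rewrite [(\col_j0 _) _ _]mxE [X in X * _]mxE [X in _ + X]mxE A0E C0E.
  case: (eqVneq v k) => [->|ne]; first by rewrite ltnn subrr mul0r.
  case: (ltngtP v k) => h.
  - by rewrite subrr mul0r.
  - by rewrite subr0.
  - by case/eqP: ne; apply: val_inj.
rewrite big_split /= (sum_delta v (zf P m)).
rewrite (sum_gt (fun k => m * zf P m k)) // (sum_lt (fun k => m * uf P m k)); last exact: ltnW.
set q := 1 - m.
have s1 : \sum_(v.+1 <= k < P) m * zf P m k =
   - (m * q ^+ P) * (P - v.+1)%:R + (q / (2 - m)) * (m * \sum_(v.+1 <= k < P) q ^+ k)
   - Kc P m * (m * \sum_(v.+1 <= k < P) q ^+ (P - k)).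
  rewrite !mulr_sumr -sumr_const_nat mulr_sumr -big_split -sumrB /=.
  apply: eq_bigr => k _; rewrite /zf -/q exprS; ring.
have s2 : \sum_(0 <= k < v) m * uf P m k =
   m * q ^+ P * v%:R - q * (m * \sum_(0 <= k < v) q ^+ k).
  rewrite (_ : v%:R = (1 : R) *+ (v - 0)); last by rewrite subn0.
  rewrite -sumr_const_nat !mulr_sumr -sumrB /=.
  apply: eq_bigr => k _; rewrite /uf -/q exprS; ring.
have g2 := geom2 m v.+1 (P - v.+1).
rewrite subnKC // in g2.
rewrite s1 s2 g2 geom1 // geom1 // -/q.
have vP := ltn_ord v.
rewrite (_ : (P - v.+1).+1 = P - v)%N; last by lia.
rewrite natrB // -addn1 natrD /zf /Kc -/q expr0.
have q0 : q != 0 by rewrite /q subr_eq0 eq_sym.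
have q2 : 2 - m != 0 by rewrite subr_eq0 eq_sym.
rewrite addn1 !exprS /q.
by field; apply/andP; split.
Qed.


Lemma C0T (R : realType) (P : nat) (m : R) :
  (Cin_mat m (fun _ _ => 0))^T = Cin_mat m (fun _ _ => 0) :> 'M_P.
Proof. by apply/matrixP => a b; rewrite [LHS]mxE !C0E eq_sym. Qed.

Lemma outerE (R : realType) (P : nat) (a b : 'cV[R]_P) x y :
  (a *m b^T) x y = a x 0 * b y 0.
Proof. by rewrite mxE big_ord1 mxE. Qed.

Lemma rho1' (R : realType) P (m : R) :
  (2 <= P)%N -> -1 < m -> m < 1 ->
  forall i j : 'I_P, (i < j)%N ->
  Gdef m (psd_sqrt (Cout_mat P 1)) i j = Gplus m i j + Gminus m i j.
Proof.
move=> P2 m1 m2 i j hij.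
have P0 : (0 < P)%N by lia.
have [hT hS] := sqrt_J R P0.
have mn1 : m != 1 by rewrite lt_eqF.
have mn2 : m != 2 by apply/eqP => e; rewrite e in m2; lra.
rewrite /Gdef; cbv zeta.
set S := psd_sqrt _ in hT hS *.
set C0 := Cin_mat m (fun _ _ => 0).
set A0 := Am C0.
set X0 := invmx A0.
set M0 := 1%:M - X0 *m C0.
set one : 'cV[R]_P := const_mx 1.
have J : const_mx 1 = one *m one^T.
  by apply/matrixP => a b; rewrite outerE !mxE mul1r.
set wv : 'cV[R]_P := \col_(k < P) (1 - m) ^+ k.
set uv : 'cV[R]_P := \col_(k < P) uf P m k.
set zv : 'cV[R]_P := \col_(k < P) zf P m k.
have hw : X0^T *m one = wv.
  rewrite /one -(L1 P m) -/C0 -/A0 mulmxA -trmx_mul /X0 mulmxV ?unitA //.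
  by rewrite trmx1 mul1mx.
have hu : M0^T *m one = uv.
  rewrite /M0 raddfB /= trmx1 mulmxDl mul1mx trmx_mul mulNmx -mulmxA hw C0T.
  rewrite /wv L2 -/C0 opprB addrC subrK //.
have hv : X0 *m C0 *m uv = uv + zv.
  have -> : C0 = A0 + (C0 - A0) by rewrite addrC subrK.
  rewrite mulmxDr mulmxDl /X0 mulVmx ?unitA // mul1mx.
  by rewrite -mulmxA /uv -L3 // -/C0 -/A0 -/zv mulmxA mulVmx ?unitA // mul1mx.
have hW : (S *m M0)^T *m S *m X0 = uv *m wv^T.
  rewrite trmx_mul -!mulmxA [S^T *m _]mulmxA hT hS J -hu -hw trmx_mul trmxK !mulmxA.
  done.
rewrite hW mulmxA hv !outerE !mxE /uf /zf /Gplus /Gminus /Kc.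
have jP := ltn_ord j.
rewrite (_ : (P - (j - i) = i + (P - j))%N); last by lia.
rewrite !exprD !exprS expr0 mulr1.
have q0 : 1 - m != 0 by rewrite subr_eq0 eq_sym.
have q2 : 2 - m != 0 by rewrite subr_eq0 eq_sym.
by field; apply/andP; split.
Qed.

Theorem theorem2 (R : realType) (P : nat) (m rho : R) :
  (2 <= P)%N -> -1 < m -> m < 1 -> psd (Cout_mat P rho) ->
  exists G : 'I_P -> 'I_P -> R,
    (rho = 1 -> forall i j : 'I_P, (i < j)%N -> G i j = Gplus m i j + Gminus m i j) /\
    exists K d0 : R, 0 < d0 /\
      forall (dm : R) (dM : 'I_P -> 'I_P -> R),
        0 < dm -> dm < d0 ->
        (forall i j : 'I_P, (i < j)%N -> `|dM i j| < dm) ->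
        corr_matrix (Cin_mat m dM) ->
        `| eps_f (Cin_mat m dM) (Cout_mat P rho)
           - eps_f (Cin_mat m (fun _ _ => 0)) (Cout_mat P rho)
           - 2 * \sum_(i < P) \sum_(j < P | (i < j)%N) G i j * dM i j |
        <= K * dm ^+ 2.
Proof.
move=> P2 m1 m2 _.
set S := psd_sqrt (Cout_mat P rho).
exists (Gdef m S); split.
  by move=> e; rewrite /S e; apply: rho1'.
set C0 := Cin_mat m (fun _ _ => 0).
set X0 := invmx (Am C0).
set M0 := 1%:M - X0 *m C0.
have [K [d0 [d00 Hest]]] := est S X0 C0 (S *m M0).
exists K, d0; split => // dm dM dm0 dmd HdM _.
set C := Cin_mat m dM.
set X := invmx (Am C).
have KX : X - X0 = - (X0 *m Fm dM *m X).
  by rewrite /X /X0 resolvent ?unitA // FmE.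
have := Hest dm X (Fm dM) (Em dM) dm0 dmd KX
  (N1_le_const (Fm_bound dm0 HdM)) (N1_le_const (Em_bound dm0 HdM)).
have dec := decompM C C0 (unitA C) (unitA C0).
rewrite /= FmE EmE -/X -/X0 in dec.
rewrite !eps_qf -/S -/C0 -/X0 -/M0 -/C -/X dec -/M0.
set M1 := X0 *m Fm dM *m X0 *m C0 - X0 *m Em dM.
set Rm := X0 *m Fm dM *m (X - X0) *m C0 - (X - X0) *m Em dM.
rewrite (_ : S *m (M0 + M1 + Rm) = S *m M0 + (S *m M1 + S *m Rm)); last first.
  by rewrite -!mulmxDr /Rm !addrA.
move=> Hb; rewrite qfD bfD -(linear_part m S dM) -/C0 -/X0 -/M0 -/M1.
apply: le_trans Hb; apply/eqW.
congr (`| _ |); ring.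
Qed.
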